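(* Let $c$ and $n$ be odd positive integers with $n>c$. Consider lattice paths in an $(n-c-1)\times(n-c-1)$ grid from the top-left corner to the bottom-right corner, using unit right and down steps and never going strictly below the diagonal joining these two corners. Then the number of such paths with an even number of unit squares of the grid lying above the path exceeds the number with an odd number of such squares by $C_{\frac{n-c-2}{2}}$, where $C_r=\frac{1}{r+1}\binom{2r}{r}$ is the $r$th Catalan number. *)

(* Defs.v *)
From mathcomp Require Import all_boot.
Set Implicit Arguments. Unset Strict Implicit. Unset Printing Implicit Defensive.

(* A lattice path in the m x m grid from the top-left corner to the
   bottom-right corner is encoded as a sequence of steps:
   true = unit right step, false = unit down step.
   Starting at the top-left corner, after a prefix with r right steps and
   d down steps the path is at column r, row d (rows counted downwards);
   the diagonal joining the corners is r = d, and "strictly below the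
   diagonal" means d > r. *)

Definition grid_path (m : nat) (s : seq bool) : bool :=
  [&& size s == (2 * m)%N, count id s == m &
      all (fun i => count negb (take i s) <= count id (take i s))
          (iota 0 (size s).+1)].

(* Number of unit squares of the m x m grid lying above the path:
   the i-th step, if it is a down step, traverses a row at column
   x = (number of right steps before it); the squares of that row lying
   above (i.e. to the upper right of) the path are the m - x squares to
   the right of the step.  Rows are in bijection with down steps. *)
Definition squares_above (m : nat) (s : seq bool) : nat :=
  \sum_(i < size s | ~~ nth true s i) (m - count id (take i s)).

Definition catalan (r : nat) : nat := 'C(r.*2, r) %/ r.+1.

(* Main.v *)
Require Import Defs.
From mathcomp Require Import all_boot all_algebra.
From mathcomp Require Import zify ring lra.
Import GRing.Theory Num.Theory.
Local Open Scope ring_scope.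

Definition B (a b : nat) : int :=
  ('C(a + b, b))%:R - (if b is b'.+1 then 'C(a + b, b') else 0%N)%:R.

Lemma B0 c : B c 0 = 1.
Proof. by rewrite /B bin0 subr0. Qed.

Lemma BS c b : B c.+1 b.+1 = B c.+1 b + B c b.+1.
Proof.
rewrite /B; case: b => [|b]; rewrite !addSn !addnS ?addn0 !binS ?bin0 !natrD; ring.
Qed.

Lemma Bdiag c : B c c.+1 = 0.
Proof.
rewrite /B.
have h : (c + c.+1 - c = c.+1)%N by lia.
have := bin_sub (leq_addr c.+1 c); rewrite h => ->.
by rewrite subrr.
Qed.

Lemma Bcat k : B k k = (catalan k)%:R.
Proof.
case: k => [|j]; first by rewrite /B /catalan.
rewrite /B /catalan.
set X := 'C(j.+1 + j.+1, j.+1).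
have -> : (j.+1.*2 = j.+1 + j.+1)%N by rewrite addnn.
set Y := 'C(j.+1 + j.+1, j).
have h := mul_bin_left (j.+1 + j.+1) j.
have e : (j.+1 + j.+1 - j = j.+2)%N by lia.
rewrite e -/X -/Y in h.
have hYX : (Y <= X)%N by nia.
have hX : (X = j.+2 * (X - Y))%N by rewrite mulnBr; lia.
rewrite -/X; by rewrite {2}hX mulKn // natrB.
Qed.

Definition E (p q : nat) : int :=
  if odd q then B q./2 p./2 else if q == 0%N then 1
  else if odd p then 0 else B q./2.-1 p./2.

Lemma hb b : (b.*2.+1)./2 = b.
Proof. exact: (half_bit_double b true). Qed.
Lemma ob b : odd (b.*2.+1) = true.
Proof. by rewrite oddS odd_double. Qed.
Lemma ob2 b : odd (b.*2.+2) = false.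
Proof. by rewrite -doubleS odd_double. Qed.
Lemma hb2 b : (b.*2.+2)./2 = b.+1.
Proof. by rewrite -doubleS half_double. Qed.

Lemma E_oo b c : E (b.*2.+1) (c.*2.+1) = B c b.
Proof. by rewrite /E ob !hb. Qed.
Lemma E_eo b c : E (b.*2) (c.*2.+1) = B c b.
Proof. by rewrite /E ob hb half_double. Qed.
Lemma E_ee b c : E (b.*2) (c.*2.+2) = B c b.
Proof. by rewrite /E ob2 odd_double hb2 half_double. Qed.
Lemma E_oe b c : E (b.*2.+1) (c.*2.+2) = 0.
Proof. by rewrite /E ob2 ob. Qed.

Lemma Erec p q : (p <= q)%N -> (0 < q)%N ->
  E p q = (if (0 < p)%N then E p.-1 q else 0)
        + (if (p < q)%N then (-1) ^+ p * E p q.-1 else 0).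
Proof.
move: (odd_double_half p) (odd_double_half q) => hp hq.
rewrite -hp -hq.
case: (odd p); case: (odd q); move: (p./2) (q./2) => b c; rewrite ?add0n ?add1n => h1 h2.
-
  rewrite E_oo /= E_eo.
  case: (ltnP b.*2.+1 c.*2.+1) => h3.
    case: c h1 h2 h3 => [|c] h1 h2 h3; first lia.
    by rewrite -signr_odd /= odd_double /= doubleS E_oe mulr0 addr0.
  by rewrite addr0.
-
  case: c h1 h2 => [|c] h1 h2; first lia.
  rewrite doubleS E_oe /= E_ee.
  have -> : (b.*2.+1 < c.*2.+2)%N by lia.
  by rewrite -signr_odd /= odd_double /= E_oo expr1 mulN1r subrr.
-
  rewrite E_eo.
  have -> : (b.*2 < c.*2.+1)%N by lia.
  rewrite -signr_odd odd_double expr0 mul1r /=.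
  case: b h1 => [|b] h1.
    case: c h1 h2 => [|c] h1 h2; first by rewrite /E /B.
    by rewrite /= add0r doubleS E_ee !B0.
  case: c h1 h2 => [|c] h1 h2; first lia.
  by rewrite (doubleS b) /= E_oo (doubleS c) -(doubleS b) E_ee BS.
-
  case: c h1 h2 => [|c] h1 h2; first lia.
  rewrite doubleS E_ee.
  case: b h1 => [|b] h1.
    by rewrite /= ?expr0 ?mul1r ?add0r (E_eo 0 c).
  rewrite (doubleS b) /= E_oe add0r.
  case: (ltnP b.*2.+2 c.*2.+2) => h3.
    rewrite -signr_odd /= odd_double /= expr0 mul1r -(doubleS b) E_eo.
    by [].
  have -> : b = c by lia.
  by rewrite Bdiag.
Qed.

Fixpoint wt (m u d : nat) (s : seq bool) : int :=
  match s with
  | [::] => ((u == m) && (d == m))%:R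
  | true :: s' => wt m u.+1 d s'
  | false :: s' => if (d < u)%N then (-1) ^+ (m - u) * wt m u d.+1 s' else 0
  end.

Definition gpg (m u d : nat) (s : seq bool) : bool :=
  [&& u + count id s == m, d + count negb s == m &
      all (fun i => d + count negb (take i s) <= u + count id (take i s))%N
          (iota 0 (size s).+1)]%N.

Definition sqa (m u : nat) (s : seq bool) : nat :=
  (\sum_(i < size s | ~~ nth true s i) (m - (u + count id (take i s))))%N.

Lemma sqa_cons m u x s :
  sqa m u (x :: s) = ((if x then 0 else m - u) + sqa m (u + x) s)%N.
Proof.
rewrite /sqa /= big_mkcond big_ord_recl /= addn0.
rewrite [in RHS]big_mkcond; congr (_ + _)%N; first by case: x.
by apply: eq_bigr => i _; rewrite add0n addnA.
Qed.

Lemma all_iotaS (P : pred nat) n :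
  all P (iota 0 n.+1) = P 0%N && all (fun i => P i.+1) (iota 0 n).
Proof. by rewrite /= -[1%N]/(1 + 0)%N iotaDl all_map. Qed.

Lemma gpg_cons m u d x s :
  gpg m u d (x :: s) = (d <= u)%N && gpg m (u + x) (d + ~~ x) s.
Proof.
rewrite /gpg (all_iotaS _ (size s).+1).
set A := all _ (iota 0 (size s).+1).
have -> : A = all (fun i => d + ~~ x + count negb (take i s) <= u + x + count id (take i s))%N (iota 0 (size s).+1).
  by apply: eq_all => i /=; rewrite !addnA.
rewrite /= !addnA !addn0.
by case: (d <= u)%N; rewrite ?andFb ?andbF ?andTb.
Qed.

Lemma gpg_le m u d s : gpg m u d s -> (d <= u)%N.
Proof.
by rewrite /gpg all_iotaS take0 /= !addn0 => /and4P [_ _ h _].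
Qed.

Lemma wt_gt m u d s : (m < u)%N -> wt m u d s = 0.
Proof.
elim: s u d => [|x s IH] u d h /=.
  by rewrite (gtn_eqF h).
case: x; first by apply: IH; lia.
by case: ifP => // _; rewrite IH // mulr0.
Qed.

Lemma wtE m u d s : (d <= u)%N ->
  wt m u d s = if gpg m u d s then (-1) ^+ (sqa m u s) else 0.
Proof.
elim: s u d => [|x s IH] u d h.
  rewrite /gpg /sqa /= big_ord0 !addn0 h andbT.
  by case: (u == m); case: (d == m).
rewrite gpg_cons sqa_cons h /=.
case: x.
  by rewrite add0n addn1 addn0 IH //; lia.
rewrite addn0 addn1.
case: (ltnP d u) => hdu.
  rewrite IH //; case: (gpg _ _ _ _); by rewrite ?mulr0 // exprD.
have -> : d = u by lia.
case: ifP => // /gpg_le; lia.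
Qed.

Fixpoint allseq (L : nat) : seq (seq bool) :=
  if L is L'.+1 then [seq true :: s | s <- allseq L'] ++ [seq false :: s | s <- allseq L']
  else [:: [::]].

Lemma mem_allseq L s : (s \in allseq L) = (size s == L).
Proof.
elim: L s => [|L IH] [|x s] //=.
  by rewrite mem_cat; apply/orP => -[] /mapP [].
rewrite mem_cat eqSS -IH.
case: x.
  rewrite mem_map; last by move=> a b [].
  by apply/orP/idP => [[]//|]; [case/mapP|left].
rewrite (mem_map (f := cons false)); last by move=> a b [].
by apply/orP/idP => [[]|]; [case/mapP | | right].
Qed.

Lemma uniq_allseq L : uniq (allseq L).
Proof.
elim: L => [|L IH] //=.
rewrite cat_uniq !map_inj_uniq //; try by move=> a b [].
rewrite IH /= andbT.
by apply/hasPn => y /mapP [s _ ->]; apply/mapP => -[t _].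
Qed.

Lemma sum_tuples L (F : seq bool -> int) :
  \sum_(t : L.-tuple bool) F t = \sum_(s <- allseq L) F s.
Proof.
rewrite -(big_map (fun t : L.-tuple bool => val t) xpredT F).
apply: perm_big; apply: uniq_perm.
- by rewrite map_inj_uniq ?index_enum_uniq //; apply: val_inj.
- exact: uniq_allseq.
move=> s; rewrite mem_allseq; apply/mapP/idP => [[t _ ->]|hs].
  by rewrite size_tuple.
by exists (Tuple hs); rewrite ?mem_index_enum.
Qed.

Lemma mainV m L : forall u d, (u <= m)%N -> (d <= u)%N -> L = (m - u + (m - d))%N ->
  \sum_(s <- allseq L) wt m u d s = E (m - u) (m - d).
Proof.
elim: L => [|L IH] u d hu hd hL.
  have -> : u = m by lia.
  have -> : d = m by lia.
  by rewrite /= big_seq1 /= !eqxx subnn.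
rewrite /= big_cat !big_map /=.
rewrite (@Erec (m - u) (m - d)); [|lia|lia].
congr (_ + _).
  case: (ltnP u m) => h.
    have -> : (0 < m - u)%N by lia.
    rewrite IH //; [|lia|lia].
    by congr E; lia.
  have -> : (0 < m - u)%N = false by lia.
  by rewrite big1 // => s _; rewrite wt_gt //; lia.
have -> : (m - u < m - d)%N = (d < u)%N by apply/idP/idP; lia.
case: ifP => hdu.
  rewrite -big_distrr /= IH; [|lia|lia|lia].
  by congr (_ * E _ _); lia.
by rewrite big1.
Qed.

Lemma card_signed L (P : pred (seq bool)) (f : seq bool -> nat) :
  (#|[set t : L.-tuple bool | P t && ~~ odd (f t)]|%:R : int)
  = #|[set t : L.-tuple bool | P t && odd (f t)]|%:R
    + \sum_(t : L.-tuple bool) (if P t then (-1) ^+ (f t) else 0).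
Proof.
rewrite -!sum1_card !natr_sum.
rewrite [LHS]big_mkcond [X in _ = X + _]big_mkcond -big_split /=.
apply: eq_bigr => t _; rewrite !inE -signr_odd.
case: (P t); last by rewrite add0r.
case: (odd (f t)).
  by rewrite expr1 addrN.
by rewrite expr0 add0r.
Qed.

Lemma gp_gpg m s : grid_path m s = gpg m 0 0 s.
Proof.
rewrite /grid_path /gpg !add0n.
have hs : size s = (count id s + count negb s)%N by rewrite -(count_predC id).
rewrite {1}hs; apply/and3P/and3P => -[/eqP h1 /eqP h2 h3]; split => //; apply/eqP; lia.
Qed.

Lemma sa_sqa m s : squares_above m s = sqa m 0 s.
Proof. by []. Qed.

Local Close Scope ring_scope.

Theorem lemma2p20 (c n : nat) :
  odd c -> odd n -> 0 < c -> c < n ->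
  #|[set t : (2 * (n - c - 1)).-tuple bool |
       grid_path (n - c - 1) t && ~~ odd (squares_above (n - c - 1) t)]|
  = #|[set t : (2 * (n - c - 1)).-tuple bool |
       grid_path (n - c - 1) t && odd (squares_above (n - c - 1) t)]|
    + catalan ((n - c - 2) %/ 2).
Proof.
move=> oc on c0 cn.
have hev : ~~ odd (n - c) by rewrite (oddB (ltnW cn)) on oc.
have e := odd_double_half (n - c).
rewrite (negbTE hev) add0n -muln2 in e.
set k := (n - c)./2 in e.
have ek : (n - c - 2) %/ 2 = k.-1 by rewrite divn2 (_ : n - c - 2 = k.-1.*2) ?half_double // -muln2; lia.
have em : n - c - 1 = (k.-1).*2.+1 by rewrite -muln2; lia.
rewrite ek.
set m := n - c - 1.
apply/eqP; rewrite -(eqr_nat int) natrD; apply/eqP.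
rewrite (card_signed _ (grid_path m) (squares_above m)); congr (_ + _)%R.
rewrite (sum_tuples _ (fun s => if grid_path m s then (-1) ^+ squares_above m s else 0)%R).
rewrite (eq_bigr (wt m 0 0)); last by move=> s _; rewrite wtE // gp_gpg sa_sqa.
rewrite (@mainV m (2 * m) 0 0) //; last by lia.
by rewrite subn0 /m em E_oo Bcat.
Qed.
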